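(* Consider the nonatomic game with tolls, in which a class-$l$ mobile at BS $j$ incurs cost density $\bar c_{lj}(\mathbf{m})=c_{lj}(\mathbf{m})+t_{lj}(\mathbf{m})$, where $t_{lj}(\mathbf{m})=\gamma_l\sum_{i=1}^L m_{ij}g_{ij}c'(m_j)$. This game is a potential game with potential function $C(\mathbf{m})=\sum_{j\in\mathcal{N}}\sum_{l=1}^L m_{lj}g_{lj}c(m_j)$, in the sense that $\partial C(\mathbf{m})/\partial m_{lj}=\bar c_{lj}(\mathbf{m})$ for all $l,j$ on the region $\{\mathbf{m}: m_j<1\ \forall j\}$. Furthermore, a congestion profile is system optimal (minimizes $C$ over all congestion profiles) only if it is a Nash equilibrium of this game with tolls.
   Context: Nonatomic model: classes $\mathcal{L}=\{1,\dots,L\}$ of nonatomic mobiles, class $l$ having total mass $M_l>0$, target SINR density $\gamma_l>0$ and power gain $h_{lj}>0$ to BS $j\in\mathcal{N}=\{1,\dots,N\}$; noise power $\sigma^2>0$. A congestion profile is $\mathbf{m}=(m_{lj})$ with $m_{lj}\ge0$, $\sum_j m_{lj}=M_l$. Set $m_j=\sum_l\gamma_l m_{lj}$, $g_{lj}=\gamma_l\sigma^2/h_{lj}$, $c(z)=1/(1-z)$ for $z<1$ and $c(z)=\infty$ for $z\ge1$, $c'(z)=1/(1-z)^2$ for $z<1$ and $c'(z)=\infty$ for $z\ge1$; $c_{lj}(\mathbf{m})=g_{lj}c(m_j)$. $\mathbf{m}$ is a Nash equilibrium of the game with costs $\bar c_{lj}$ if for all $l,j$, $m_{lj}>0$ implies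 $\bar c_{lj}(\mathbf{m})\le \bar c_{lk}(\mathbf{m})$ for all $k$. Standing feasibility assumption: $\sum_l\gamma_l M_l<N$. *)

(* Defs.v *)
From HB Require Import structures.
From mathcomp Require Import all_boot all_order all_algebra.
From mathcomp Require Import all_classical all_reals all_analysis.
Set Implicit Arguments. Unset Strict Implicit. Unset Printing Implicit Defensive.
Import Order.TTheory GRing.Theory Num.Theory.
Import numFieldNormedType.Exports.
Local Open Scope ring_scope.

Section Defs.
Variables (R : realType) (L N : nat).

Definition load (gam : 'I_L -> R) (m : 'I_L -> 'I_N -> R) (j : 'I_N) : R :=
  \sum_(l < L) gam l * m l j.

Definition is_profile (M : 'I_L -> R) (m : 'I_L -> 'I_N -> R) : Prop :=
  (forall l j, 0 <= m l j) /\ (forall l, \sum_(j < N) m l j = M l).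

Definition cfun (z : R) : \bar R :=
  if z < 1 then ((1 - z)^-1)%:E else +oo%E.

Definition dcfun (z : R) : \bar R :=
  if z < 1 then (((1 - z) ^+ 2)^-1)%:E else +oo%E.

Definition gfun (gam : 'I_L -> R) (sigma2 : R) (h : 'I_L -> 'I_N -> R)
  (l : 'I_L) (j : 'I_N) : R := gam l * sigma2 / h l j.

Definition cost gam sigma2 h (m : 'I_L -> 'I_N -> R) l j : \bar R :=
  ((gfun gam sigma2 h l j)%:E * cfun (load gam m j))%E.

Definition toll gam sigma2 h (m : 'I_L -> 'I_N -> R) (l : 'I_L) j : \bar R :=
  ((gam l)%:E * (\sum_(i < L) m i j * gfun gam sigma2 h i j)%:E
     * dcfun (load gam m j))%E.

Definition tolled_cost gam sigma2 h m l j : \bar R :=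
  (cost gam sigma2 h m l j + toll gam sigma2 h m l j)%E.

Definition potential gam sigma2 h (m : 'I_L -> 'I_N -> R) : \bar R :=
  (\sum_(j < N) \sum_(l < L)
     (m l j * gfun gam sigma2 h l j)%:E * cfun (load gam m j))%E.

Definition shift_entry (m : 'I_L -> 'I_N -> R) (l : 'I_L) (j : 'I_N) (t : R) :
  'I_L -> 'I_N -> R :=
  fun l' j' => if (l' == l) && (j' == j) then m l' j' + t else m l' j'.

Definition is_nash (cbar : 'I_L -> 'I_N -> \bar R) (m : 'I_L -> 'I_N -> R) : Prop :=
  forall l j, 0 < m l j -> forall k, (cbar l j <= cbar l k)%E.

Definition system_optimal gam sigma2 h (M : 'I_L -> R) m : Prop :=
  is_profile M m /\
  forall m', is_profile M m' -> (potential gam sigma2 h m <= potential gam sigma2 h m')%E.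

End Defs.

(* Main.v *)
Require Import Defs.
From HB Require Import structures.
From mathcomp Require Import all_boot all_order all_algebra.
From mathcomp Require Import all_classical all_reals all_analysis.
From mathcomp Require Import ring lra.
Import Order.TTheory GRing.Theory Num.Theory.
Import numFieldNormedType.Exports.
Set Implicit Arguments. Unset Strict Implicit. Unset Printing Implicit Defensive.
Local Open Scope ring_scope.

Definition lin (R : realType) (L N : nat) (gam : 'I_L -> R) (sigma2 : R)
  (h : 'I_L -> 'I_N -> R) (m : 'I_L -> 'I_N -> R) (j : 'I_N) : R :=
  \sum_(i < L) m i j * gfun gam sigma2 h i j.

Definition colf (R : realType) (s b : R) : R := s * (1 - b)^-1.

Definition realpot (R : realType) (L N : nat) (gam : 'I_L -> R) (sigma2 : R)
  (h : 'I_L -> 'I_N -> R) (m : 'I_L -> 'I_N -> R) : R :=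
  \sum_(j < N) colf (lin gam sigma2 h m j) (load gam m j).

Lemma shift_sum (R : realType) (L N : nat) (m : 'I_L -> 'I_N -> R) l j t
  (c : 'I_L -> R) j' :
  \sum_(i < L) c i * shift_entry m l j t i j' =
  \sum_(i < L) c i * m i j' + (if j' == j then c l * t else 0).
Proof.
case: (eqVneq j' j) => [->|nj].
  rewrite (bigD1 l) //= [in RHS](bigD1 l) //= /shift_entry !eqxx /= mulrDr.
  rewrite -!addrA; congr (_ + _).
  rewrite addrC; congr (_ + _); apply: eq_bigr => i /negbTE -> //.
rewrite addr0; apply: eq_bigr => i _; rewrite /shift_entry (negbTE nj) andbF //.
Qed.

Lemma shift_sumr (R : realType) (L N : nat) (m : 'I_L -> 'I_N -> R) l j t
  (c : 'I_L -> R) j' :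
  \sum_(i < L) shift_entry m l j t i j' * c i =
  \sum_(i < L) m i j' * c i + (if j' == j then t * c l else 0).
Proof.
have := shift_sum m l j t c j'.
rewrite (eq_bigr (fun i => shift_entry m l j t i j' * c i)); last by move=> i _; rewrite mulrC.
rewrite (eq_bigr (fun i => m i j' * c i) (F1 := fun i => c i * m i j')); last by move=> i _; rewrite mulrC.
by rewrite mulrC.
Qed.

Lemma shift_rowsum (R : realType) (L N : nat) (m : 'I_L -> 'I_N -> R) l j t i :
  \sum_(j' < N) shift_entry m l j t i j' =
  \sum_(j' < N) m i j' + (if i == l then t else 0).
Proof.
case: (eqVneq i l) => [->|nl].
  rewrite (bigD1 j) //= [in RHS](bigD1 j) //= /shift_entry !eqxx /=.
  rewrite -!addrA; congr (_ + _).
  rewrite addrC; congr (_ + _); apply: eq_bigr => j' /negbTE -> //; by rewrite andbF.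
rewrite addr0; apply: eq_bigr => j' _; rewrite /shift_entry (negbTE nl) //.
Qed.

Lemma load_shift (R : realType) (L N : nat) (gam : 'I_L -> R) (m : 'I_L -> 'I_N -> R) l j t j' :
  load gam (shift_entry m l j t) j' = load gam m j' + (if j' == j then gam l * t else 0).
Proof. exact: shift_sum. Qed.

Lemma lin_shift (R : realType) (L N : nat) (gam : 'I_L -> R) sigma2 h
   (m : 'I_L -> 'I_N -> R) l j t j' :
  lin gam sigma2 h (shift_entry m l j t) j' =
  lin gam sigma2 h m j' + (if j' == j then t * gfun gam sigma2 h l j else 0).
Proof.
rewrite /lin shift_sumr; case: eqP => // -> //.
Qed.

Lemma realpot_shift (R : realType) (L N : nat) (gam : 'I_L -> R) sigma2 h
   (m : 'I_L -> 'I_N -> R) l j t :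
  realpot gam sigma2 h (shift_entry m l j t) =
  realpot gam sigma2 h m - colf (lin gam sigma2 h m j) (load gam m j)
  + colf (lin gam sigma2 h m j + t * gfun gam sigma2 h l j) (load gam m j + gam l * t).
Proof.
rewrite /realpot (bigD1 j) //= [in RHS](bigD1 j) //= lin_shift load_shift eqxx.
rewrite (eq_bigr (fun j' => colf (lin gam sigma2 h m j') (load gam m j'))); last first.
  by move=> j' nj; rewrite lin_shift load_shift (negbTE nj) !addr0.
ring.
Qed.

Lemma pot_real (R : realType) (L N : nat) (gam : 'I_L -> R) sigma2 h
   (m : 'I_L -> 'I_N -> R) : (forall j, load gam m j < 1) ->
  potential gam sigma2 h m = (realpot gam sigma2 h m)%:E.
Proof.
move=> hl; rewrite /potential /realpot -sumEFin; apply: eq_bigr => j _.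
rewrite /cfun hl /colf /lin mulr_suml -sumEFin; apply: eq_bigr => l _.
by rewrite EFinM.
Qed.

Lemma tolled_val (R : realType) (L N : nat) (gam : 'I_L -> R) sigma2 h
   (m : 'I_L -> 'I_N -> R) l j : load gam m j < 1 ->
  tolled_cost gam sigma2 h m l j =
  (gfun gam sigma2 h l j * (1 - load gam m j)^-1
   + gam l * lin gam sigma2 h m j * ((1 - load gam m j)^+2)^-1)%:E.
Proof.
move=> hl; rewrite /tolled_cost /cost /toll /cfun /dcfun hl.
by rewrite -!EFinM -EFinD.
Qed.

Lemma der_lin (R : realType) (S g : R) : is_derive (0:R) (1:R) (fun t : R => S + g * t) g.
Proof.
have H1 := @is_derive_cst R R R S 0 1.
have H2 := @is_deriveZ R R R id g 0 1 1 (@is_derive_id R R 0 1).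
have H3 := is_deriveD H1 H2.
rewrite add0r scaler1 in H3.
apply: near_eq_is_derive H3.
by near=> t.
Unshelve. all: by end_near.
Qed.

Lemma der_inv (R : realType) (f : R -> R) (df : R) x : f x != 0 -> is_derive x (1:R) f df ->
  is_derive x (1:R) (fun t => (f t)^-1) (- (f x) ^- 2 * df).
Proof.
move=> fx [d1 d2]; apply: DeriveDef; first exact: derivableV.
by rewrite deriveV // d2.
Qed.

Lemma der_frac (R : realType) (K S g b c : R) : b != 0 ->
  is_derive (0:R) (1:R) (fun t : R => K + (S + g * t) * (b + c * t)^-1)
    (g * b^-1 - S * c * (b^+2)^-1).
Proof.
move=> b0.
have h1 := der_lin S g.
have h2 : is_derive (0:R) (1:R) (fun t : R => (b + c * t)^-1) (- (b + c * 0) ^- 2 * c).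
  by apply: der_inv; [rewrite mulr0 addr0|exact: der_lin].
have H := is_deriveD (@is_derive_cst R R R K 0 1) (is_deriveM h1 h2).
have H2 : is_derive (0:R) (1:R) (fun t : R => K + (S + g * t) * (b + c * t)^-1)
   (0 + ((S + g * 0) *: (- (b + c * 0) ^- 2 * c) + (b + c * 0)^-1 *: g)).
  apply: near_eq_is_derive H.
  by near=> t.
apply: is_derive_eq H2 _.
rewrite /GRing.scale /= !mulr0 !addr0 add0r -exprVn. field. done.
Unshelve. all: by end_near.
Qed.

Lemma part1 (R : realType) (L N : nat) (gam : 'I_L -> R) (h : 'I_L -> 'I_N -> R) (sigma2 : R)
  (hgam : forall l, 0 < gam l) (m : 'I_L -> 'I_N -> R) : (forall j, load gam m j < 1) ->
     forall (l : 'I_L) (j : 'I_N),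
       is_derive (0 : R) (1 : R)
         (fun t : R => fine (potential gam sigma2 h (shift_entry m l j t)))
         (fine (tolled_cost gam sigma2 h m l j)).
Proof.
move=> hl l j.
set b := load gam m j; set S := lin gam sigma2 h m j; set g := gfun gam sigma2 h l j.
have hb : 0 < 1 - b by rewrite subr_gt0; exact: hl.
have Hd := @der_frac R (realpot gam sigma2 h m - colf S b) S g (1 - b) (- gam l) (lt0r_neq0 hb).
apply: is_derive_eq.
  apply: near_eq_is_derive Hd.
  have he : 0 < (1 - b) / gam l by rewrite divr_gt0.
  near=> t.
  have ht : `|t| < (1 - b) / gam l.
    near: t. first [exact: (@nbhs0_lt R R _ he) | exact: (@nbhs0_lt R R^o _ he) | exact: (nbhs0_lt he)].
  have hls : forall j', load gam (shift_entry m l j t) j' < 1.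
    move=> j'; rewrite load_shift; case: eqP => [->|_]; last by rewrite addr0.
    rewrite ltr_pdivlMr // in ht.
    have := ler_norm t; have := hgam l; rewrite -/b; nra.
  rewrite pot_real // realpot_shift /= -/b -/S -/g /colf.
  congr (_ + _ * _^-1); ring.
rewrite tolled_val // -/b -/S -/g /=.
by rewrite mulrN mulNr opprK (mulrC S).
Unshelve. all: by end_near.
Qed.

Lemma small_lim (R : realType) (a K d : R) : 0 < d ->
  (forall e, 0 < e -> e <= d -> a <= e * K) -> a <= 0.
Proof.
move=> hd H; rewrite leNgt; apply/negP => ha.
have hK := normr_ge0 K.
have hden : 0 < a + d * `|K| by rewrite ltr_wpDr // mulr_ge0 // ltW.
set e := a * d / (a + d * `|K|).
have he : 0 < e by rewrite /e divr_gt0 // mulr_gt0.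
have hed : e <= d by rewrite /e ler_pdivrMr //; nra.
have h1 := H e he hed.
have h2 : e * K <= e * `|K| by apply: ler_wpM2l; [exact: ltW | exact: ler_norm].
have h3 : e * `|K| < a by rewrite /e mulrAC ltr_pdivrMr //; nra.
lra.
Qed.

Lemma cross (R : realType) (x y p q : R) : 0 < p -> 0 < q -> x / p <= y / q -> x * q <= y * p.
Proof. by move=> hp hq; rewrite ler_pdivrMr // mulrAC ler_pdivlMr. Qed.

Lemma cross' (R : realType) (x y p q : R) : 0 < p -> 0 < q -> x * q <= y * p -> x / p <= y / q.
Proof. by move=> hp hq; rewrite ler_pdivrMr // mulrAC ler_pdivlMr. Qed.

Lemma term_le (R : realType) n (F : 'I_n -> \bar R) i :
  (forall k, 0 <= F k)%E -> (F i <= \sum_(k < n) F k)%E.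
Proof. move=> h0; rewrite (bigD1 i) //=; apply: leeDl; exact: sume_ge0. Qed.
Lemma part2 (R : realType) (L N : nat)
  (M gam : 'I_L -> R) (h : 'I_L -> 'I_N -> R) (sigma2 : R)
  (hM : forall l, 0 < M l) (hgam : forall l, 0 < gam l)
  (hh : forall l j, 0 < h l j) (hsigma : 0 < sigma2)
  (hfeas : \sum_(l < L) gam l * M l < N%:R) (m : 'I_L -> 'I_N -> R) :
  system_optimal gam sigma2 h M m -> is_nash (tolled_cost gam sigma2 h m) m.
Proof.
move=> [[hpos hsum] hopt] l j hmj k.
have hN : (0 < N)%N := leq_ltn_trans (leq0n j) (ltn_ord j).
have hNr : (0 : R) < N%:R by rewrite ltr0n.
have hg : forall i j', 0 < gfun gam sigma2 h i j'.
  by move=> i j'; rewrite /gfun divr_gt0 // mulr_gt0.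
pose u := fun (i : 'I_L) (j' : 'I_N) => M i / N%:R.
have hu : is_profile M u.
  split => [i j'|i]; first by rewrite /u divr_ge0 // ltW.
  rewrite /u sumr_const card_ord -mulr_natl; field; exact: lt0r_neq0.
have hlu : forall j', load gam u j' < 1.
  move=> j'; rewrite /load /u.
  have -> : \sum_(i < L) gam i * (M i / N%:R) = (\sum_(i < L) gam i * M i) / N%:R.
    by rewrite mulr_suml; apply: eq_bigr => i _; rewrite mulrA.
  by rewrite ltr_pdivrMr // mul1r.
have hmu := hopt u hu; rewrite (pot_real _ _ hlu) in hmu.
have hl : forall j', load gam m j' < 1.
  move=> j'; rewrite ltNge; apply/negP => hge.
  case: (pselect (exists l0, 0 < m l0 j')) => [[l0 hl0]|hno]; last first.
    have h0 : load gam m j' = 0.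
      rewrite /load big1 // => i _.
      have -> : m i j' = 0; last by rewrite mulr0.
      have := hpos i j'; rewrite le_eqVlt => /orP[/eqP <- //|hp].
      by exfalso; apply: hno; exists i.
    by move: hge; rewrite h0; lra.
  have hnn : forall j'' l'', (0 <= (m l'' j'' * gfun gam sigma2 h l'' j'')%:E
                                   * cfun (load gam m j''))%E.
    move=> j'' l''; apply: mule_ge0; first by rewrite lee_fin mulr_ge0 // ltW.
    rewrite /cfun; case: ifP => hlt; last exact: leey.
    by rewrite lee_fin invr_ge0 subr_ge0 ltW.
  have hterm : (+oo <= potential gam sigma2 h m)%E.
    rewrite /potential; apply: (le_trans _ (term_le j' _)); last first.
      by move=> k'; apply: sume_ge0 => l' _.
    apply: (le_trans _ (term_le l0 _)); last by move=> l'.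
    rewrite /cfun ifF; last by apply/negbTE; rewrite -leNgt.
    by rewrite gt0_muley // lte_fin mulr_gt0.
  by move: (le_trans hterm hmu); rewrite leye_eq.
case: (eqVneq j k) => [<-|njk]; first exact: le_refl.
have nkj : (k == j) = false by rewrite eq_sym; exact/negbTE.
rewrite !tolled_val // lee_fin.
set bj := load gam m j; set bk := load gam m k.
set Sj := lin gam sigma2 h m j; set Sk := lin gam sigma2 h m k.
set gj := gfun gam sigma2 h l j; set gk := gfun gam sigma2 h l k.
set c := gam l.
have hc : 0 < c := hgam l.
have hBj : 0 < 1 - bj by rewrite subr_gt0; exact: hl.
have hBk : 0 < 1 - bk by rewrite subr_gt0; exact: hl.
have hSj : 0 <= Sj by apply: sumr_ge0 => i _; rewrite mulr_ge0 // ltW.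
have hSk : 0 <= Sk by apply: sumr_ge0 => i _; rewrite mulr_ge0 // ltW.
have hgj : 0 < gj := hg l j.
have hgk : 0 < gk := hg l k.
set Qj := (1 - bj) * gj + Sj * c.
set Qk := (1 - bk) * gk + Sk * c.
pose d := Num.min (m l j) ((1 - bk) / (2 * c)).
have hd : 0 < d by rewrite lt_min hmj divr_gt0 // mulr_gt0.
have key : Qj * (1 - bk) ^+ 2 - Qk * (1 - bj) ^+ 2 <= 0.
  apply: (small_lim (K := c * (Qk * (1 - bj) + Qj * (1 - bk))) hd) => e he.
  rewrite le_min => /andP[hem hek].
  rewrite ler_pdivlMr ?mulr_gt0 // in hek.
  pose m2 := shift_entry (shift_entry m l j (- e)) l k e.
  have hp2 : is_profile M m2.
    split => [i j'|i].
      rewrite /m2 /shift_entry /=.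
      case: (eqVneq i l) => [->|nil] /=; last exact: hpos.
      case: (eqVneq j' k) => [->|nk] /=.
        by rewrite nkj /=; rewrite addr_ge0 // ltW.
      case: (eqVneq j' j) => [->|nj] /=; last exact: hpos.
      by rewrite subr_ge0.
    rewrite /m2 !shift_rowsum hsum.
    by case: (i == l); rewrite ?addr0 // addrNK.
  have hl2 : forall j', load gam m2 j' < 1.
    move=> j'; rewrite /m2 !load_shift.
    case: (eqVneq j' j) => [->|nj'].
      rewrite (negbTE njk) addr0 -/bj -/c.
      have := hl j; rewrite -/bj; nra.
    rewrite addr0; case: (eqVneq j' k) => [->|nk]; last by rewrite addr0.
    rewrite -/bk -/c; nra.
  have := hopt m2 hp2; rewrite (pot_real _ _ hl) (pot_real _ _ hl2) lee_fin.
  rewrite /m2 realpot_shift lin_shift load_shift nkj !addr0 realpot_shift.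
  rewrite -/bj -/bk -/Sj -/Sk -/gj -/gk -/c.
  move=> H.
  have Hd : 0 <= e * (Qk / ((1 - bk) * (1 - bk - c * e)) - Qj / ((1 - bj) * (1 - bj + c * e))).
    have -> : e * (Qk / ((1 - bk) * (1 - bk - c * e)) - Qj / ((1 - bj) * (1 - bj + c * e)))
      = - colf Sj bj + colf (Sj + - e * gj) (bj + c * - e) - colf Sk bk + colf (Sk + e * gk) (bk + c * e).
      rewrite /colf /Qj /Qk.
      have n1 : 1 - bj != 0 by exact: lt0r_neq0.
      have n2 : 1 - bk != 0 by exact: lt0r_neq0.
      have n3 : 1 - bj + c * e != 0 by apply: lt0r_neq0; rewrite ltr_wpDr // mulr_ge0 // ltW.
      have n4 : 1 - bk - c * e != 0 by apply: lt0r_neq0; nra.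
      have -> : 1 - (bj + c * - e) = 1 - bj + c * e by ring.
      have -> : 1 - (bk + c * e) = 1 - bk - c * e by ring.
      by field; rewrite n1 n2 n3 n4.
    lra.
  rewrite pmulr_rge0 // subr_ge0 in Hd.
  have hp1 : 0 < 1 - bj + c * e by rewrite ltr_wpDr // mulr_ge0 // ltW.
  have hp2' : 0 < 1 - bk - c * e by nra.
  have := cross (mulr_gt0 hBj hp1) (mulr_gt0 hBk hp2') Hd.
  lra.
have -> : gj / (1 - bj) + c * Sj / (1 - bj) ^+ 2 = Qj / (1 - bj) ^+ 2.
  by rewrite /Qj; field; exact: lt0r_neq0.
have -> : gk / (1 - bk) + c * Sk / (1 - bk) ^+ 2 = Qk / (1 - bk) ^+ 2.
  by rewrite /Qk; field; exact: lt0r_neq0.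
apply: cross'; rewrite ?exprn_gt0 //; lra.
Qed.

Theorem proposition12 (R : realType) (L N : nat)
  (M gam : 'I_L -> R) (h : 'I_L -> 'I_N -> R) (sigma2 : R)
  (hM : forall l, 0 < M l) (hgam : forall l, 0 < gam l)
  (hh : forall l j, 0 < h l j) (hsigma : 0 < sigma2)
  (hfeas : \sum_(l < L) gam l * M l < N%:R) :
  (forall (m : 'I_L -> 'I_N -> R), (forall j, load gam m j < 1) ->
     forall (l : 'I_L) (j : 'I_N),
       is_derive (0 : R) (1 : R)
         (fun t : R => fine (potential gam sigma2 h (shift_entry m l j t)))
         (fine (tolled_cost gam sigma2 h m l j)))
  /\
  (forall m : 'I_L -> 'I_N -> R,
     system_optimal gam sigma2 h M m -> is_nash (tolled_cost gam sigma2 h m) m).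
Proof.
split; first by move=> m hl; exact: part1.
by move=> m; exact: part2.
Qed.
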